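(* Consider an instance of the unique games problem: a graph $G=(V,E)$ with $|V|=n$ vertices, positive edge weights $w_{ij}>0$ for $(i,j)\in E$, a number of labels $k\ge 2$, and for each edge $(i,j)\in E$ a permutation $\sigma_{ij}$ of $\{1,\dots,k\}$. A labeling assigns to each vertex $i\in V$ a label $r_i\in\{1,\dots,k\}$; an edge $(i,j)$ is matched if $r_j=\sigma_{ij}(r_i)$, and the value of the labeling is the sum of $w_{ij}$ over matched edges. Let $z^*$ be the maximum value over all labelings. Let (P1) be the problem $$\text{maximize } E[z]=\frac14\sum_{(i,j)\in E}\sum_{r=1}^k w_{ij}\big(1+y_{ir}+y_{j\sigma_{ij}(r)}+y_{ir}y_{j\sigma_{ij}(r)}\big)$$ subject to $\sum_{r=1}^k y_{ir}=2-k$ for all $i\in V$, and $-1\le y_{ir}\le 1$ for all $r=1,\dots,k$, $i\in V$. Then (P1) is a continuous extension of the unique games problem: its objective is defined for all feasible $y$, and for every labeling $(r_i)_{i\in V}$ the point with $y_{ir_i}=1$ and $y_{ir}=-1$ for $r\ne r_i$ is feasible with objective value equal to the value of the labeling. Moreover, (1) an optimal solution of (P1) is attained with $y_{ir}\in\{-1,1\}$ for all $i,r$, and (2) the optimal value of (P1) equals $z^*$.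
   Context: The variables $y_{ir}$ correspond to probabilities $p_{ir}=\frac12(1+y_{ir})$ with which a randomized algorithm independently assigns label $r$ to vertex $i$; $E[z]$ is the expected total weight of matched edges under this randomized assignment. *)

(* Defs.v *)
From HB Require Import structures.
From mathcomp Require Import all_boot all_order all_algebra all_fingroup.
Set Implicit Arguments. Unset Strict Implicit. Unset Printing Implicit Defensive.
Import Order.TTheory GRing.Theory Num.Theory.
Local Open Scope ring_scope.

Section UG.
Variables (R : realFieldType) (n k : nat).
Variables (E : {set 'I_n * 'I_n}) (w : 'I_n -> 'I_n -> R)
          (sigma : 'I_n -> 'I_n -> {perm 'I_k}).

Definition ug_value (r : 'I_n -> 'I_k) : R :=
  \sum_(e in E | r e.2 == sigma e.1 e.2 (r e.1)) w e.1 e.2.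

Definition ug_opt_labeling (r : 'I_n -> 'I_k) : Prop :=
  forall r' : 'I_n -> 'I_k, ug_value r' <= ug_value r.

Definition P1_feasible (y : 'I_n -> 'I_k -> R) : Prop :=
  (forall i, \sum_(s < k) y i s = 2 - k%:R) /\
  (forall i s, -1 <= y i s <= 1).

Definition P1_obj (y : 'I_n -> 'I_k -> R) : R :=
  4^-1 * \sum_(e in E) \sum_(s < k)
     w e.1 e.2 * (1 + y e.1 s + y e.2 (sigma e.1 e.2 s)
                    + y e.1 s * y e.2 (sigma e.1 e.2 s)).

Definition P1_optimal (y : 'I_n -> 'I_k -> R) : Prop :=
  P1_feasible y /\ forall y', P1_feasible y' -> P1_obj y' <= P1_obj y.

Definition label_point (r : 'I_n -> 'I_k) : 'I_n -> 'I_k -> R :=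
  fun i s => if s == r i then 1 else -1.
End UG.

(* Main.v *)
Require Import Defs.
From HB Require Import structures.
From mathcomp Require Import all_boot all_order all_algebra all_fingroup.
From mathcomp Require Import ring lra.
Import Order.TTheory GRing.Theory Num.Theory.
Local Open Scope ring_scope.

Set Implicit Arguments. Unset Strict Implicit.
Section Aux.
Variables (R : realFieldType) (n k : nat).
Variables (E : {set 'I_n * 'I_n}) (w : 'I_n -> 'I_n -> R)
          (sigma : 'I_n -> 'I_n -> {perm 'I_k}).

Definition pp (y : 'I_n -> 'I_k -> R) l s : R := (1 + y l s) / 2.

Lemma obj_pp y : P1_obj E w sigma y =
  \sum_(e in E) w e.1 e.2 * \sum_(s < k) pp y e.1 s * pp y e.2 (sigma e.1 e.2 s).
Proof.
rewrite /P1_obj big_distrr /=; apply: eq_bigr => e _.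
rewrite big_distrr big_distrr /=; apply: eq_bigr => s _.
by rewrite /pp; field.
Qed.

Lemma sum_ind (T : finType) (a : T) (F : T -> R) :
  \sum_(t : T) (a == t)%:R * F t = F a.
Proof.
rewrite (bigD1 a) //= eqxx mul1r big1 ?addr0 // => t /negbTE.
by rewrite eq_sym => ->; rewrite mul0r.
Qed.

Lemma prod_ind (a : 'I_n) (F : 'I_n -> R) :
  \prod_(l < n) (if l == a then F l else 1) = F a.
Proof. by rewrite -big_mkcond big_pred1_eq. Qed.

Lemma marg (p : 'I_n -> 'I_k -> R) (i j : 'I_n) (tau : 'I_k -> 'I_k) :
  (forall l, \sum_(t < k) p l t = 1) -> i != j ->
  \sum_(s < k) p i s * p j (tau s) =
  \sum_(r : {ffun 'I_n -> 'I_k}) (\prod_(l < n) p l (r l)) * (r j == tau (r i))%:R.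
Proof.
move=> p1 nij.
pose G s l t := p l t * (if l == i then (t == s)%:R else 1)
                      * (if l == j then (t == tau s)%:R else 1).
have H1 s : p i s * p j (tau s) = \prod_(l < n) \sum_(t < k) G s l t.
  transitivity (\prod_(l < n) ((if l == i then p i s else 1) *
                              (if l == j then p j (tau s) else 1))).
    by rewrite big_split /= !prod_ind.
  apply: eq_bigr => l _; rewrite /G.
  case: (eqVneq l i) => [->|nli].
    rewrite (negbTE nij) mulr1 (bigD1 s) //= eqxx !mulr1 big1 ?addr0 // => t /negbTE.
    by move=> ->; rewrite mulr0 mul0r.
  case: (eqVneq l j) => [->|nlj].
    rewrite mul1r (bigD1 (tau s)) //= eqxx !mulr1 big1 ?addr0 // => t /negbTE ->.
    by rewrite !mulr0.
  by rewrite mulr1; under eq_bigr do rewrite !mulr1; rewrite p1.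
under eq_bigr do rewrite H1 bigA_distr_bigA.
rewrite exchange_big /=; apply: eq_bigr => r _.
transitivity (\sum_(s < k) (r i == s)%:R *
   ((\prod_(l < n) p l (r l)) * (r j == tau s)%:R)); last by rewrite sum_ind.
apply: eq_bigr => s _; rewrite /G !big_split /= !prod_ind.
by rewrite mulrCA mulrA.
Qed.

Lemma feas_pp y : P1_feasible y ->
  (forall l s, 0 <= pp y l s) /\ (forall l, \sum_(s < k) pp y l s = 1).
Proof.
case=> Hs Hb; split.
  move=> l s; rewrite /pp; have /andP[h1 h2] := Hb l s.
  by apply: divr_ge0; lra.
move=> l; rewrite /pp -big_distrl big_split /= sumr_const card_ord Hs.
by rewrite addrCA subrr addr0 divff // pnatr_eq0.
Qed.

Lemma ug_as_sum (r : 'I_n -> 'I_k) : ug_value E w sigma r =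
  \sum_(e in E) w e.1 e.2 * (r e.2 == sigma e.1 e.2 (r e.1))%:R.
Proof.
rewrite /ug_value big_mkcondr; apply: eq_bigr => e _.
by case: eqP => _; rewrite ?mulr1 ?mulr0.
Qed.

Lemma bound y (rs : {ffun 'I_n -> 'I_k}) :
  (forall e, e \in E -> e.1 != e.2) ->
  (forall r : {ffun 'I_n -> 'I_k}, ug_value E w sigma r <= ug_value E w sigma rs) ->
  P1_feasible y -> P1_obj E w sigma y <= ug_value E w sigma rs.
Proof.
move=> Hne Hmax /feas_pp [p0 p1].
rewrite obj_pp.
have -> : \sum_(e in E) w e.1 e.2 * \sum_(s < k) pp y e.1 s * pp y e.2 (sigma e.1 e.2 s)
  = \sum_(e in E) w e.1 e.2 * \sum_(r : {ffun 'I_n -> 'I_k})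
   (\prod_(l < n) pp y l (r l)) * (r e.2 == sigma e.1 e.2 (r e.1))%:R.
  by apply: eq_bigr => e eE; rewrite marg // Hne.
have -> : \sum_(e in E) w e.1 e.2 * \sum_(r : {ffun 'I_n -> 'I_k})
   (\prod_(l < n) pp y l (r l)) * (r e.2 == sigma e.1 e.2 (r e.1))%:R
   = \sum_(r : {ffun 'I_n -> 'I_k})
   (\prod_(l < n) pp y l (r l)) * ug_value E w sigma r.
  under eq_bigr do rewrite big_distrr.
  rewrite exchange_big /=; apply: eq_bigr => r _.
  rewrite ug_as_sum big_distrr; apply: eq_bigr => e _ /=.
  by rewrite mulrCA.
apply: (@le_trans _ _ (\sum_(r : {ffun 'I_n -> 'I_k})
   (\prod_(l < n) pp y l (r l)) * ug_value E w sigma rs)).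
  apply: ler_sum => r _; apply: ler_wpM2l; last exact: Hmax.
  by apply: prodr_ge0 => l _.
rewrite -big_distrl /= -bigA_distr_bigA /=.
by rewrite big1 ?mul1r // => l _; rewrite p1.
Qed.

End Aux.

Lemma lp_pp (R : realFieldType) n k (r : 'I_n -> 'I_k) l s :
  pp (label_point R r) l s = (s == r l)%:R.
Proof.
rewrite /pp /label_point; case: eqP => _ /=.
  by field.
by rewrite subrr mul0r.
Qed.

Lemma lp_feas (R : realFieldType) n k (r : 'I_n -> 'I_k) :
  P1_feasible (label_point R r).
Proof.
split.
  move=> i.
  have -> : \sum_(s < k) label_point R r i s = \sum_(s < k) ((r i == s)%:R * 2 - 1).
    apply: eq_bigr => s _; rewrite /label_point eq_sym.
    case: eqP => _ /=; rewrite ?mul1r ?mul0r; lra.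
  by rewrite sumrB sum_ind sumr_const card_ord.
move=> i s; rewrite /label_point; case: eqP => _; apply/andP; split; lra.
Qed.

Theorem theorem1 (R : realFieldType) (n k : nat)
    (E : {set 'I_n * 'I_n}) (w : 'I_n -> 'I_n -> R)
    (sigma : 'I_n -> 'I_n -> {perm 'I_k}) :
  (2 <= k)%N ->
  (forall e, e \in E -> 0 < w e.1 e.2) ->
  (forall e, e \in E -> e.1 != e.2) ->
  (* continuous extension *)
  (forall r : 'I_n -> 'I_k,
      P1_feasible (label_point R r) /\
      P1_obj E w sigma (label_point R r) = ug_value E w sigma r) /\
  (* (1) an optimal solution with all entries in {-1,1} *)
  (exists y, P1_optimal E w sigma y /\
             forall i s, y i s = 1 \/ y i s = -1) /\
  (* (2) optimal value of (P1) equals z* *)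
  (exists y r, P1_optimal E w sigma y /\ ug_opt_labeling E w sigma r /\
               P1_obj E w sigma y = ug_value E w sigma r).
Proof.
move=> hk hw hne.
have hk0 : (0 < k)%N by exact: ltnW.
pose f0 : {ffun 'I_n -> 'I_k} := [ffun _ => Ordinal hk0].
have [rs _ Hmax] := @arg_maxP _ R _ f0 xpredT (fun f => ug_value E w sigma f) isT.
have Hm : forall r : {ffun 'I_n -> 'I_k}, ug_value E w sigma r <= ug_value E w sigma rs.
  by move=> r; exact: Hmax.
have lpobj : forall r : 'I_n -> 'I_k,
    P1_obj E w sigma (label_point R r) = ug_value E w sigma r.
  move=> r; rewrite obj_pp ug_as_sum; apply: eq_bigr => e _.
  congr (_ * _).
  under eq_bigr do rewrite !lp_pp.
  by rewrite (eq_bigr (fun s => (r e.1 == s)%:R * (sigma e.1 e.2 s == r e.2)%:R))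
    ?sum_ind 1?eq_sym // => s _; rewrite eq_sym.
have opt : P1_optimal E w sigma (label_point R rs).
  split; first exact: lp_feas.
  by move=> y' fy'; rewrite lpobj; exact: bound.
split; first by move=> r; split; [exact: lp_feas | exact: lpobj].
split.
  exists (label_point R rs); split => // i s; rewrite /label_point.
  by case: eqP; [left|right].
exists (label_point R rs), rs; split => //; split; last exact: lpobj.
move=> r'.
have -> : ug_value E w sigma r' = ug_value E w sigma [ffun l => r' l].
  by rewrite !ug_as_sum; apply: eq_bigr => e _; rewrite !ffunE.
exact: Hm.
Qed.
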